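(* Let $\psi(\bm{x},\bm{y})$ be a quantifier-free Presburger formula with $\bm{x}$ ranging over $\mathbb{Z}^n$ and $\bm{y}$ over $\mathbb{Z}^m$, let $\gamma$ be the sentence $\forall\bm{y}\,\exists\bm{x}\colon\psi(\bm{x},\bm{y})$, and let $\Gamma(\bm{y})$ be the formula $\exists\bm{x}\colon\psi(\bm{x},\bm{y})$. Define the formula $\varphi((x,\bar{\bm{x}}),(y,\bar{\bm{y}}))$, where $x,y$ are single variables and $\bar{\bm{x}},\bar{\bm{y}}$ are vectors of $m$ variables, by $$\varphi\coloneqq (x<0\wedge y<0)\vee(x>0\wedge y>0)\vee(x<0\wedge y=0)\vee(x=0\wedge y>0)\vee(x=0\wedge y=0)\vee(x<0\wedge y>0\wedge\Gamma(\bar{\bm{y}})).$$ Then the relation on $\mathbb{Z}^{1+m}$ defined by $\varphi$ is a well-quasi-ordering if and only if $\gamma$ is true, i.e. $\Gamma(\bm{w})$ holds for every $\bm{w}\in\mathbb{Z}^m$.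
   Context: Presburger formulas are over $\langle\mathbb{Z};+,<,(\equiv_m)_m,0,1\rangle$; quantifier-free formulas are Boolean combinations of linear inequalities and modulo constraints. A well-quasi-ordering on a set $X$ is a reflexive and transitive relation $\le$ on $X$ such that every infinite sequence $x_1,x_2,\ldots\in X$ has $i<j$ with $x_i\le x_j$. *)

(* Defs.v *)
From mathcomp Require Import ssreflect ssrbool eqtype ssrnat fintype.
From Stdlib Require Import ZArith.
Set Implicit Arguments.
Unset Strict Implicit.
Open Scope Z_scope.

Inductive pterm (V : Type) : Type :=
  | TVar : V -> pterm V
  | TZero : pterm V
  | TOne : pterm V
  | TAdd : pterm V -> pterm V -> pterm V.

Inductive qf_formula (V : Type) : Type :=
  | FTrue : qf_formula V
  | FLt : pterm V -> pterm V -> qf_formula V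
  | FEq : pterm V -> pterm V -> qf_formula V
  | FCong : positive -> pterm V -> pterm V -> qf_formula V
  | FNot : qf_formula V -> qf_formula V
  | FAnd : qf_formula V -> qf_formula V -> qf_formula V
  | FOr : qf_formula V -> qf_formula V -> qf_formula V.

Fixpoint teval (V : Type) (e : V -> Z) (t : pterm V) : Z :=
  match t with
  | TVar v => e v
  | TZero => 0
  | TOne => 1
  | TAdd t1 t2 => teval e t1 + teval e t2
  end.

Fixpoint holds (V : Type) (e : V -> Z) (f : qf_formula V) : Prop :=
  match f with
  | FTrue => True
  | FLt t1 t2 => teval e t1 < teval e t2
  | FEq t1 t2 => teval e t1 = teval e t2
  | FCong m t1 t2 => (Zpos m | teval e t1 - teval e t2)
  | FNot g => ~ holds e g
  | FAnd g h => holds e g /\ holds e h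
  | FOr g h => holds e g \/ holds e h
  end.

Definition wqo (X : Type) (le : X -> X -> Prop) : Prop :=
  (forall x, le x x) /\
  (forall x y z, le x y -> le y z -> le x z) /\
  (forall f : nat -> X, exists i j : nat, (i < j)%nat /\ le (f i) (f j)).

Definition env (n m : nat) (x : 'I_n -> Z) (y : 'I_m -> Z) : 'I_n + 'I_m -> Z :=
  fun v => match v with inl i => x i | inr j => y j end.

Definition Gamma (n m : nat) (psi : qf_formula ('I_n + 'I_m)) (y : 'I_m -> Z) : Prop :=
  exists x : 'I_n -> Z, holds (env x y) psi.

Definition phi_rel (n m : nat) (psi : qf_formula ('I_n + 'I_m))
    (a b : Z * ('I_m -> Z)) : Prop :=
  let x := fst a in let y := fst b in let ybar := snd b in
  (x < 0 /\ y < 0) \/ (x > 0 /\ y > 0) \/ (x < 0 /\ y = 0) \/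
  (x = 0 /\ y > 0) \/ (x = 0 /\ y = 0) \/ (x < 0 /\ y > 0 /\ Gamma psi ybar).

(* Main.v *)
Require Import Defs.
From mathcomp Require Import ssreflect ssrbool eqtype ssrnat fintype.
From Stdlib Require Import ZArith Lia.

Lemma phi_sgn (n m : nat) (psi : qf_formula ('I_n + 'I_m)) a b :
  (forall w, Gamma psi w) -> (Z.sgn (fst a) <= Z.sgn (fst b))%Z -> phi_rel psi a b.
Proof.
move=> G H; rewrite /phi_rel.
destruct (Z.lt_trichotomy (fst a) 0) as [Ha|[Ha|Ha]];
destruct (Z.lt_trichotomy (fst b) 0) as [Hb|[Hb|Hb]];
try (pose proof (Z.sgn_neg _ Ha)); try (pose proof (Z.sgn_pos _ Ha));
try (pose proof (Z.sgn_neg _ Hb)); try (pose proof (Z.sgn_pos _ Hb));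
try (rewrite Ha in H); try (rewrite Hb in H); simpl in H;
try lia.
right; right; right; right; right; split; [lia|split; [lia|apply G]].
Qed.

Theorem lemma5p1 (n m : nat) (psi : qf_formula ('I_n + 'I_m)) :
  wqo (phi_rel psi) <-> (forall w : 'I_m -> Z, Gamma psi w).
Proof.
split.
- move=> [_ [T _]] w.
  have H1 : phi_rel psi ((-1)%Z, w) (0%Z, w) by rewrite /phi_rel /=; lia.
  have H2 : phi_rel psi (0%Z, w) (1%Z, w) by rewrite /phi_rel /=; lia.
  have := T _ _ _ H1 H2; rewrite /phi_rel /=.
  move=> [|[|[|[|[|]]]]]; try lia. by move=> [_ [_ ?]].
- move=> G; split; [|split].
  + move=> x; apply: phi_sgn => //; lia.
  + move=> x y z Hxy Hyz; apply: phi_sgn => //.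
    move: Hxy Hyz; rewrite /phi_rel.
    destruct (Z.lt_trichotomy (fst x) 0) as [Ha|[Ha|Ha]];
    destruct (Z.lt_trichotomy (fst z) 0) as [Hb|[Hb|Hb]];
    try (pose proof (Z.sgn_neg _ Ha)); try (pose proof (Z.sgn_pos _ Ha));
    try (pose proof (Z.sgn_neg _ Hb)); try (pose proof (Z.sgn_pos _ Hb));
    try (rewrite Ha); try (rewrite Hb); simpl; intros; lia.
  + move=> f.
    have S : forall i, (-1 <= Z.sgn (fst (f i)) <= 1)%Z.
      move=> i; destruct (Z.lt_trichotomy (fst (f i)) 0) as [Ha|[Ha|Ha]].
      * rewrite (Z.sgn_neg _ Ha); lia.
      * rewrite Ha; simpl; lia.
      * rewrite (Z.sgn_pos _ Ha); lia.
    have S0 := S 0%nat; have S1 := S 1%nat; have S2 := S 2%nat; have S3 := S 3%nat.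
    destruct (Z_le_gt_dec (Z.sgn (fst (f 0%nat))) (Z.sgn (fst (f 1%nat)))).
      by exists 0%nat, 1%nat; split => //; apply: phi_sgn.
    destruct (Z_le_gt_dec (Z.sgn (fst (f 1%nat))) (Z.sgn (fst (f 2%nat)))).
      by exists 1%nat, 2%nat; split => //; apply: phi_sgn.
    exists 2%nat, 3%nat; split => //; apply: phi_sgn => //; lia.
Qed.
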